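(* Let $G$ be a graph formed from the claw $K_{1,3}$ by subdividing a single edge $0$ or more times. If $L$ is a list-assignment with $|L(v)|\ge\deg(v)+1$ for all $v\in V(G)$ and $\alpha,\beta$ are unfrozen $L$-colourings, then $\alpha\sim\beta$.
   Context: An $L$-colouring is a proper colouring $\varphi$ with $\varphi(v)\in L(v)$ for all $v$. A vertex $v$ is frozen under $\varphi$ if every colour of $L(v)\setminus\{\varphi(v)\}$ appears on a neighbour of $v$; a colouring is unfrozen if at least one vertex is not frozen. $\alpha\sim\beta$ means $\alpha$ can be transformed into $\beta$ by a sequence of single-vertex recolouring steps, each keeping the colouring a proper $L$-colouring. *)

(* Defs.v *)
From mathcomp Require Import all_boot.
Set Implicit Arguments. Unset Strict Implicit. Unset Printing Implicit Defensive.

(* A finite simple graph is given by a vertex finType V and a symmetric,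
   irreflexive adjacency relation adj : rel V. Colours range over a finType C;
   a list-assignment is L : V -> {set C}. *)

Section Colouring.
Variables (V C : finType) (adj : rel V).

Definition deg (v : V) : nat := #|[set w | adj v w]|.

Definition is_Lcol (L : V -> {set C}) (phi : V -> C) : Prop :=
  (forall v, phi v \in L v) /\ (forall u v, adj u v -> phi u <> phi v).

Definition frozen (L : V -> {set C}) (phi : V -> C) (v : V) : Prop :=
  forall c, c \in L v -> c <> phi v -> exists2 w, adj v w & phi w = c.

Definition unfrozen (L : V -> {set C}) (phi : V -> C) : Prop :=
  exists v, ~ frozen L phi v.

Definition recol_step (alpha beta : V -> C) : Prop :=
  exists v, forall w, w <> v -> alpha w = beta w.

Inductive reconf (L : V -> {set C}) : (V -> C) -> (V -> C) -> Prop :=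
  | reconf_refl phi : is_Lcol L phi -> reconf L phi phi
  | reconf_step alpha beta gamma :
      reconf L alpha beta -> is_Lcol L gamma -> recol_step beta gamma ->
      reconf L alpha gamma.

End Colouring.

(* The claw K_{1,3} with one edge subdivided k times, on vertex set 'I_(k+4):
   0 = centre, 1 and 2 = unsubdivided leaves, and the path 0 - 3 - 4 - ... - (k+3). *)
Definition claw_base (k : nat) (u v : 'I_(k + 4)) : bool :=
  ((val u == 0) && ((val v == 1) || (val v == 2) || (val v == 3)))
  || ((3 <= val u) && (val v == (val u).+1)).

Definition subdiv_claw (k : nat) : rel 'I_(k + 4) :=
  fun u v => claw_base u v || claw_base v u.
Arguments subdiv_claw k : clear implicits.

(* Main.v *)
Require Import Defs.
From mathcomp Require Import all_boot zify.
From Stdlib Require Import Classical.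
Set Implicit Arguments. Unset Strict Implicit. Unset Printing Implicit Defensive.

Section Gen.
Variables (V C : finType) (adj : rel V) (L : V -> {set C}).
Hypothesis adj_sym : forall u v, adj u v = adj v u.
Hypothesis adj_irr : forall u, adj u u = false.

Notation rc := (reconf adj L).
Notation col := (is_Lcol adj L).
Notation fr := (frozen adj L).

Lemma reconf_col a b : rc a b -> col a /\ col b.
Proof. elim=> [phi H | a' b' c' _ [Ha _] Hc _]; by split. Qed.

Lemma reconf_trans a b c : rc a b -> rc b c -> rc a c.
Proof.
move=> H1 H2; elim: H2 H1 => [phi _ | a' b' c' _ IH Hc Hs] H1 //.
exact: reconf_step (IH H1) Hc Hs.
Qed.

Lemma reconf_sym a b : rc a b -> rc b a.
Proof.
elim=> [phi H | a' b' c' H IH Hc [v Hv]]; first exact: reconf_refl.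
have [_ Hb] := reconf_col H.
apply: reconf_trans IH.
apply: reconf_step (reconf_refl Hc) Hb _.
by exists v => w /Hv ->.
Qed.

Definition upd (phi : V -> C) (x : V) (c : C) := fun w => if w == x then c else phi w.

Lemma upd_same phi x c : upd phi x c x = c.
Proof. by rewrite /upd eqxx. Qed.
Lemma upd_other phi x c w : w <> x -> upd phi x c w = phi w.
Proof. by rewrite /upd => /eqP/negbTE ->. Qed.

Definition PS (P : V -> Prop) (phi : V -> C) :=
  (forall v, P v -> phi v \in L v) /\ (forall u v, P u -> P v -> adj u v -> phi u <> phi v).

Lemma PS_mono P P' phi : PS P phi -> (forall w, P' w -> P w) -> PS P' phi.
Proof. by move=> [H1 H2] H; split=> [v /H/H1 | u v /H Hu /H Hv /(H2 _ _ Hu Hv)]. Qed.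

Lemma PS_col phi : col phi <-> PS (fun _ => True) phi.
Proof.
split=> [[H1 H2] | [H1 H2]]; split=> //.
- by move=> u v _ _; apply: H2.
- by move=> v; apply: H1.
- by move=> u v; apply: H2.
Qed.

Lemma upd_PS P phi x c : PS P phi -> c \in L x ->
  (forall w, P w -> w <> x -> adj x w -> phi w <> c) ->
  PS (fun w => w = x \/ P w) (upd phi x c).
Proof.
move=> [H1 H2] Hc Hn; split.
  move=> v [-> | Pv]; first by rewrite upd_same.
  by rewrite /upd; case: eqP => [-> //| _]; exact: H1 v Pv.
move=> u v Pu Pv Huv; rewrite /upd.
case: eqP => [Eu | Nu]; case: eqP => [Ev | Nv].
- by subst; rewrite adj_irr in Huv.
- subst; case: Pv => [// | Pv]; apply/nesym/Hn => //.
- subst; case: Pu => [// | Pu]; apply: Hn => //; by rewrite adj_sym.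
- case: Pu => [// | Pu]; case: Pv => [// | Pv]; exact: H2.
Qed.

Lemma upd_col phi x c : col phi -> c \in L x -> (forall w, adj x w -> phi w <> c) ->
  col (upd phi x c).
Proof.
move=> /PS_col H Hc Hn; apply/PS_col.
apply: PS_mono (upd_PS H Hc _) _ => //; last by move=> w _; right.
by move=> w _ _; apply: Hn.
Qed.

Lemma step_upd a phi x c : rc a phi -> c \in L x -> (forall w, adj x w -> phi w <> c) ->
  rc a (upd phi x c).
Proof.
move=> H Hc Hn; have [_ Hp] := reconf_col H.
apply: reconf_step H (upd_col Hp Hc Hn) _.
by exists x => w Hw; rewrite upd_other.
Qed.

Lemma step_to a phi psi x : rc a phi -> col psi -> (forall w, w <> x -> phi w = psi w) -> rc a psi.
Proof. by move=> H Hp Hw; apply: reconf_step H Hp _; exists x. Qed.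

Lemma notfrozen phi v : ~ fr phi v ->
  exists c, [/\ c \in L v, c <> phi v & forall w, adj v w -> phi w <> c].
Proof.
move=> H; apply: NNPP => H'; apply: H => c Hc Hne.
apply: NNPP => H2; apply: H'; exists c; split => // w Hw E.
by apply: H2; exists w.
Qed.

Lemma unfrozenI phi v c : c \in L v -> c <> phi v -> (forall w, adj v w -> phi w <> c) ->
  ~ fr phi v.
Proof. by move=> Hc Hne Hn Hf; have [w Hw E] := Hf c Hc Hne; exact: Hn w Hw E. Qed.

Lemma frozen_ext phi psi v : (forall w, w = v \/ adj v w -> phi w = psi w) ->
  ~ fr phi v -> ~ fr psi v.
Proof.
move=> E /notfrozen [c [Hc Hne Hn]]; apply: (unfrozenI (c := c)) => //.
  by rewrite -E //; left.
by move=> w Hw; rewrite -E; [apply: Hn | right].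
Qed.

Lemma frozen_tight phi p w1 : (forall v, deg adj v < #|L v|) -> col phi -> fr phi p ->
  adj p w1 -> phi w1 \in L p /\ (forall w2, adj p w2 -> w2 <> w1 -> phi w2 <> phi w1).
Proof.
move=> HL [Hin _] Hf Hw1.
set N := [set w | adj p w].
have Hsub : L p :\ phi p \subset phi @: N.
  apply/subsetP => c; rewrite in_setD1 => /andP [/eqP Hne Hc].
  have [w Hw <-] := Hf c Hc Hne; apply: imset_f; by rewrite inE.
have Hc1 : #|L p :\ phi p| = #|L p| - 1.
  by rewrite (cardsD1 (phi p) (L p)) Hin add1n subn1.
have Hdeg : #|N| = deg adj p by [].
have H1 := subset_leq_card Hsub.
have H2 : #|phi @: N| <= #|N| := leq_imset_card _ _.
have H3 := HL p.
have Heq : #|L p :\ phi p| = #|phi @: N| by lia.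
have Hinj : #|phi @: N| == #|N| by apply/eqP; lia.
move/imset_injP: Hinj => Hinj.
have HE := subset_cardP Heq Hsub.
have Hw1N : w1 \in N by rewrite inE.
split.
  have : phi w1 \in phi @: N by apply: imset_f.
  by rewrite -HE in_setD1 => /andP [].
move=> w2 Hw2 Hne E; apply: Hne; apply: Hinj => //; by rewrite inE.
Qed.

Lemma avoidF (S F : {set C}) : #|F| < #|S| -> exists c, c \in S /\ c \notin F.
Proof.
move=> H.
have : 0 < #|S :\: F|.
  rewrite cardsD; have := subset_leq_card (subsetIr S F); lia.
by case/card_gt0P => c; rewrite inE => /andP [H1 H2]; exists c.
Qed.

Lemma avoid1 (S : {set C}) a : 1 < #|S| -> exists c, [/\ c \in S & c <> a].
Proof.
move=> H; have [|c [H1 H2]] := avoidF (F := [set a]) (S := S); first by rewrite cards1.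
by exists c; split => // E; rewrite E in_set1 eqxx in H2.
Qed.

Lemma avoid2 (S : {set C}) a b : 2 < #|S| -> exists c, [/\ c \in S, c <> a & c <> b].
Proof.
move=> H; have [|c [H1 H2]] := avoidF (F := [set a; b]) (S := S).
  by rewrite cards2; case: (a != b) => /=; lia.
by exists c; split => // E; rewrite E !inE eqxx ?orbT in H2.
Qed.

Lemma avoid3 (S : {set C}) a b d : 3 < #|S| -> exists c, [/\ c \in S, c <> a, c <> b & c <> d].
Proof.
move=> H; have [|c [H1 H2]] := avoidF (F := a |: [set b; d]) (S := S).
  have := cardsU1 a [set b; d]; rewrite cards2; case: (b != d); case: (a \notin _) => /=; lia.
by exists c; split => // E; rewrite E !inE eqxx ?orbT in H2.
Qed.

Lemma two_distinct (S : {set C}) : 1 < #|S| -> exists a b, [/\ a \in S, b \in S & a <> b].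
Proof.
move=> H; have /card_gt0P [a Ha] : 0 < #|S| by exact: ltnW H.
have [b [Hb Hne]] := avoid1 a H; by exists b, a; split.
Qed.

Lemma pairs (S : {set C}) p q p' q' : 1 < #|S| ->
  (forall c, c \in S -> c = p \/ c = q) -> (forall c, c \in S -> c = p' \/ c = q') ->
  (p = p' /\ q = q') \/ (p = q' /\ q = p').
Proof.
move=> /two_distinct [a [b [Ha Hb Hne]]] H1 H2.
case: (H1 _ Ha) => Ea; case: (H1 _ Hb) => Eb; case: (H2 _ Ha) => Ea'; case: (H2 _ Hb) => Eb';
  subst; first [by left; split | by right; split | by exfalso; apply: Hne].
Qed.

Lemma in4 (S : {set C}) a b d e : 3 < #|S| ->
  (forall c, c \in S -> [\/ c = a, c = b, c = d | c = e]) -> e \in S.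
Proof.
move=> H Hs; apply: NNPP => He.
have [c [Hc H1 H2 H3]] := avoid3 a b d H.
by case: (Hs c Hc) => // E; subst.
Qed.

End Gen.

Section Claw.
Variable k : nat.
Local Notation V := 'I_(k+4).
Local Notation adj := (subdiv_claw k).
Variables (C : finType) (L : V -> {set C}).
Hypothesis HL : forall v, (deg adj v).+1 <= #|L v|.

Lemma adjE (u v : V) : adj u v =
  ((val u == 0) && ((val v == 1) || (val v == 2) || (val v == 3))) ||
  ((3 <= val u) && (val v == (val u).+1)) ||
  ((val v == 0) && ((val u == 1) || (val u == 2) || (val u == 3))) ||
  ((3 <= val v) && (val u == (val v).+1)).
Proof. by rewrite /subdiv_claw /claw_base !orbA. Qed.

Lemma adj_sym u v : adj u v = adj v u.
Proof. by rewrite /subdiv_claw orbC. Qed.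

Lemma adj_irr u : adj u u = false.
Proof. apply/negbTE; rewrite adjE; lia. Qed.

Lemma lt0 : 0 < k + 4. Proof. lia. Qed.
Definition nv (i : nat) : V := insubd (Ordinal lt0) i.
Lemma nvE i : i < k + 4 -> val (nv i) = i.
Proof. by move=> H; rewrite val_insubd /= H. Qed.
Lemma veq (w : V) i : i < k + 4 -> val w = i -> w = nv i.
Proof. by move=> H E; apply: val_inj; rewrite nvE. Qed.

Lemma v0E : val (nv 0) = 0. Proof. by rewrite nvE //; lia. Qed.
Lemma v1E : val (nv 1) = 1. Proof. by rewrite nvE //; lia. Qed.
Lemma v2E : val (nv 2) = 2. Proof. by rewrite nvE //; lia. Qed.
Lemma v3E : val (nv 3) = 3. Proof. by rewrite nvE //; lia. Qed.

Lemma ltv (w : V) : val w < k + 4. Proof. exact: ltn_ord. Qed.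

Lemma deg_ge (v : V) (S : {set V}) : (forall w, w \in S -> adj v w) -> #|S| <= deg adj v.
Proof.
move=> H; apply: subset_leq_card; apply/subsetP => w /H; by rewrite inE.
Qed.

Lemma L_ge2 v : 1 < #|L v|.
Proof.
have H := HL v.
have [w Hw] : exists w, adj v w.
  have := ltv v; case: (ltnP (val v) 1) => H1.
    exists (nv 1); rewrite adjE v1E; lia.
  case: (ltnP (val v) 4) => H2.
    exists (nv 0); rewrite adjE v0E; lia.
  exists (nv (val v).-1); rewrite adjE nvE; lia.
have : #|[set w]| <= deg adj v by apply: deg_ge => w' /set1P ->.
rewrite cards1; lia.
Qed.


Lemma deg_ge2 v a b : a <> b -> adj v a -> adj v b -> 2 < #|L v|.
Proof.
move=> Hab Ha Hb; have H := HL v.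
have : #|[set a; b]| <= deg adj v by apply: deg_ge => w /set2P [] ->.
rewrite cards2; have -> : a != b by apply/eqP. lia.
Qed.

Lemma L0_ge4 : 3 < #|L (nv 0)|.
Proof.
have H := HL (nv 0).
have : #|nv 1 |: [set nv 2; nv 3]| <= deg adj (nv 0).
  apply: deg_ge => w; rewrite !inE => /orP [/eqP -> | /orP [] /eqP ->];
  rewrite adjE v0E ?v1E ?v2E ?v3E; lia.
rewrite cardsU1 cards2 !inE.
have -> : nv 2 != nv 3 by apply/eqP => /(congr1 val); rewrite v2E v3E.
have -> : nv 1 == nv 2 = false by apply/eqP => /(congr1 val); rewrite v1E v2E.
have -> : nv 1 == nv 3 = false by apply/eqP => /(congr1 val); rewrite v1E v3E.
simpl; lia.
Qed.

Lemma Lmid_ge3 v : 3 <= val v -> val v < k + 3 -> 2 < #|L v|.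
Proof.
move=> H1 H2.
case: (boolP (val v == 3)) => H3.
  apply: (deg_ge2 (a := nv (val v).+1) (b := nv 0)).
  - move=> /(congr1 val); rewrite !nvE; lia.
  - rewrite adjE nvE; lia.
  - rewrite adjE nvE; lia.
apply: (deg_ge2 (a := nv (val v).+1) (b := nv (val v).-1)).
- move=> /(congr1 val); rewrite !nvE; lia.
- rewrite adjE nvE; lia.
- rewrite adjE nvE; lia.
Qed.

Lemma nb0 w : adj (nv 0) w -> [\/ w = nv 1, w = nv 2 | w = nv 3].
Proof.
rewrite adjE v0E => H.
have := ltv w; have : val w = 1 \/ val w = 2 \/ val w = 3 by lia.
case=> [E | [E | E]] _; [constructor 1 | constructor 2 | constructor 3]; apply: veq => //; lia.
Qed.

Lemma nb1 w : adj (nv 1) w -> w = nv 0.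
Proof. rewrite adjE v1E => H; apply: veq; lia. Qed.
Lemma nb2 w : adj (nv 2) w -> w = nv 0.
Proof. rewrite adjE v2E => H; apply: veq; lia. Qed.

Lemma a01 : adj (nv 0) (nv 1). Proof. rewrite adjE v0E v1E; lia. Qed.
Lemma a02 : adj (nv 0) (nv 2). Proof. rewrite adjE v0E v2E; lia. Qed.
Lemma a03 : adj (nv 0) (nv 3). Proof. rewrite adjE v0E v3E; lia. Qed.
Lemma a10 : adj (nv 1) (nv 0). Proof. by rewrite adj_sym a01. Qed.
Lemma a20 : adj (nv 2) (nv 0). Proof. by rewrite adj_sym a02. Qed.
Lemma a30 : adj (nv 3) (nv 0). Proof. by rewrite adj_sym a03. Qed.

Lemma vne i j : i < k + 4 -> j < k + 4 -> i <> j -> nv i <> nv j.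
Proof. by move=> Hi Hj Hne /(congr1 val); rewrite !nvE. Qed.


Local Notation col := (is_Lcol adj L).
Local Notation rc := (reconf adj L).
Local Notation fr := (frozen adj L).
Local Notation stepU := (step_upd adj_sym adj_irr).
Local Notation v0 := (nv 0).
Local Notation v1 := (nv 1).
Local Notation v2 := (nv 2).
Local Notation v3 := (nv 3).

Lemma n01 : v0 <> v1. Proof. apply: vne; lia. Qed.
Lemma n02 : v0 <> v2. Proof. apply: vne; lia. Qed.
Lemma n03 : v0 <> v3. Proof. apply: vne; lia. Qed.
Lemma n12 : v1 <> v2. Proof. apply: vne; lia. Qed.
Lemma n13 : v1 <> v3. Proof. apply: vne; lia. Qed.
Lemma n23 : v2 <> v3. Proof. apply: vne; lia. Qed.

Lemma big2 (w : V) : 2 < val w -> [/\ w <> v0, w <> v1 & w <> v2].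
Proof. by move=> H; split => /(congr1 val); rewrite nvE //; lia. Qed.

Lemma small2 (w : V) : val w <= 2 -> [\/ w = v0, w = v1 | w = v2].
Proof.
move=> H; have : val w = 0 \/ val w = 1 \/ val w = 2 by lia.
case=> [E|[E|E]]; [constructor 1|constructor 2|constructor 3]; apply: veq => //; lia.
Qed.

Definition Q j := forall a b, col a -> col b -> (forall v : V, j < val v -> a v = b v) ->
  (exists v : V, val v <= j /\ ~ fr a v) -> (exists v : V, val v <= j /\ ~ fr b v) -> rc a b.

Definition good s u := (exists a, [/\ a \in L v1, a <> s & a <> u]) /\
                       (exists b, [/\ b \in L v2, b <> s & b <> u]).

Lemma good_sym s u : good s u -> good u s.
Proof. by case=> [[a [H1 H2 H3]] [b [H4 H5 H6]]]; split; [exists a | exists b]. Qed.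

Lemma same_class p q : col p -> col q -> (forall v : V, 2 < val v -> p v = q v) ->
  p v0 = q v0 -> rc p q.
Proof.
move=> Hp Hq E E0.
have H1 : rc p (upd p v1 (q v1)).
  apply: stepU (reconf_refl Hp) _ _; first exact: (proj1 Hq).
  move=> w /nb1 ->; rewrite E0; exact: (proj2 Hq) _ _ a01.
apply: (step_to (x := v2) H1 Hq) => w Hw; rewrite /upd; case: eqP => [-> //| Hw1].
case: (ltnP 2 (val w)) => Hw'; first exact: E.
by case: (small2 Hw') => // ->.
Qed.

Lemma hop p t : col p -> good (p v0) t -> t \in L v0 -> t <> p v3 ->
  exists q, [/\ col q, (forall v : V, 2 < val v -> q v = p v), q v0 = t & rc p q].
Proof.
move=> Hp [[a [Ha1 Ha2 Ha3]] [b [Hb1 Hb2 Hb3]]] Ht Ht3.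
have H1 : rc p (upd p v1 a).
  apply: stepU (reconf_refl Hp) Ha1 _ => w /nb1 ->; exact: nesym.
have H2 : rc p (upd (upd p v1 a) v2 b).
  apply: stepU H1 Hb1 _ => w /nb2 ->; rewrite upd_other; [exact: nesym | exact: n01].
have H3 : rc p (upd (upd (upd p v1 a) v2 b) v0 t).
  apply: stepU H2 Ht _ => w /nb0 [] ->.
  - rewrite upd_other ?upd_same; [exact: Ha3 | exact: n12].
  - by rewrite upd_same; apply: Hb3.
  - rewrite !upd_other //; first [exact: (nesym Ht3) | exact: (nesym n23) | exact: (nesym n13)].
exists (upd (upd (upd p v1 a) v2 b) v0 t); split => //.
- by have [] := reconf_col H3.
- by move=> v /big2 [B0 B1 B2]; rewrite !upd_other.
- exact: upd_same.
Qed.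

Lemma escape p : col p -> (exists v : V, val v <= 2 /\ ~ fr p v) ->
  exists u, [/\ u \in L v0, u <> p v0, u <> p v3 & good (p v0) u].
Proof.
move=> [Hin Hpr] [v [Hv Hf]].
have A01 := Hpr _ _ a01; have A02 := Hpr _ _ a02; have A03 := Hpr _ _ a03.
case: (small2 Hv) => E; subst v; have [c [Hc Hne Hn]] := notfrozen Hf.
- exists c; split => //.
  + exact: nesym (Hn _ a03).
  + split; [exists (p v1) | exists (p v2)]; split => //;
    first [exact: Hin | exact: nesym | exact: (Hn _ a01) | exact: (Hn _ a02)].
- have [u [Hu Hu1 Hu2 Hu3]] := avoid3 (p v0) (p v3) (p v2) L0_ge4.
  exists u; split => //; split.
    case: (classic (u = p v1)) => Eu.
      exists c; split => //; first [exact: (nesym (Hn _ a10)) | exact: (nesym (Hn _ a20)) | by rewrite Eu].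
    exists (p v1); split => //; first [exact: Hin | exact: nesym | by apply: nesym].
  exists (p v2); split => //; first [exact: Hin | exact: nesym | by apply: nesym].
- have [u [Hu Hu1 Hu2 Hu3]] := avoid3 (p v0) (p v3) (p v1) L0_ge4.
  exists u; split => //; split.
    exists (p v1); split => //; first [exact: Hin | exact: nesym | by apply: nesym].
  case: (classic (u = p v2)) => Eu.
    exists c; split => //; first [exact: (nesym (Hn _ a10)) | exact: (nesym (Hn _ a20)) | by rewrite Eu].
  exists (p v2); split => //; first [exact: Hin | exact: nesym | by apply: nesym].
Qed.

Lemma nogood s u : ~ good s u ->
  (forall c, c \in L v1 -> c = s \/ c = u) \/ (forall c, c \in L v2 -> c = s \/ c = u).
Proof.
move=> H; apply: NNPP => H'; apply: H; split.
- apply: NNPP => H1; apply: H'; left => c Hc; apply: NNPP => H2; apply: H1.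
  exists c; split => // E; apply: H2; [left | right] => //.
- apply: NNPP => H1; apply: H'; right => c Hc; apply: NNPP => H2; apply: H1.
  exists c; split => // E; apply: H2; [left | right] => //.
Qed.

Lemma Q2 : Q 2.
Proof.
move=> a b Ha Hb E Ua Ub.
set R := fun t => exists q, [/\ col q, (forall v : V, 2 < val v -> q v = a v), q v0 = t & rc a q].
have R0 : R (a v0) by exists a; split => //; exact: reconf_refl.
have e3 : a v3 = b v3 by apply: E; rewrite v3E.
have Rhop : forall s t, R s -> good s t -> t \in L v0 -> t <> a v3 -> R t.
  move=> s t [q [Hq Eq Hs Hr]] Hg Ht Ht3.
  have [|||q' [Hq' Eq' Ht' Hr']] := hop (p := q) (t := t) Hq; rewrite ?Hs ?Eq ?v3E //.
  exists q'; split => //; last exact: reconf_trans Hr Hr'.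
  by move=> v Hv; rewrite Eq' // Eq.
have Rfin : R (b v0) -> rc a b.
  move=> [q [Hq Eq Hs Hr]]; apply: reconf_trans Hr (same_class Hq Hb _ Hs).
  by move=> v Hv; rewrite Eq // E.
have Htin : b v0 \in L v0 by exact: (proj1 Hb).
have Ht3 : b v0 <> a v3 by rewrite e3; exact: (proj2 Hb) _ _ a03.
have [u [Hu Hu1 Hu3 Hgu]] := escape Ha Ua.
have [w [Hw Hw1 Hw3 Hgw]] := escape Hb Ub.
rewrite -e3 in Hw3.
set s := a v0 in R0 Hu1 Hgu *; set t := b v0 in Htin Ht3 Hw1 Hgw *.
case: (classic (s = t)) => [Est | Nst].
  by apply: Rfin; rewrite -/t -Est.
case: (classic (good s t)) => Gst; first exact: Rfin (Rhop _ _ R0 Gst Htin Ht3).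
have Nut : u <> t by move=> Eut; apply: Gst; rewrite -Eut.
have Nws : w <> s by move=> Ews; apply: Gst; apply: good_sym; rewrite -Ews.
have Ru := Rhop _ _ R0 Hgu Hu Hu3.
case: (classic (u = w)) => [Euw | Nuw].
  subst w; exact: Rfin (Rhop _ _ Ru (good_sym Hgw) Htin Ht3).
case: (classic (good u w)) => Guw.
  exact: Rfin (Rhop _ _ (Rhop _ _ Ru Guw Hw Hw3) (good_sym Hgw) Htin Ht3).
case: (classic (good s w)) => Gsw.
  exact: Rfin (Rhop _ _ (Rhop _ _ R0 Gsw Hw Hw3) (good_sym Hgw) Htin Ht3).
case: (classic (good u t)) => Gut.
  exact: Rfin (Rhop _ _ Ru Gut Htin Ht3).
exfalso.
have L1 := L_ge2 v1; have L2 := L_ge2 v2.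
case: (nogood Gst) => H1; case: (nogood Guw) => H2; case: (nogood Gsw) => H3;
  case: (nogood Gut) => H4;
  first [ case: (pairs L1 H1 H2) => [[]|[]] // 
        | case: (pairs L2 H1 H2) => [[]|[]] //
        | case: (pairs L1 H1 H3) => [[]|[]] //
        | case: (pairs L2 H1 H3) => [[]|[]] //
        | case: (pairs L1 H1 H4) => [[]|[]] //
        | case: (pairs L2 H1 H4) => [[]|[]] //
        | case: (pairs L1 H2 H3) => [[]|[]] //
        | case: (pairs L2 H2 H3) => [[]|[]] //
        | case: (pairs L1 H2 H4) => [[]|[]] //
        | case: (pairs L2 H2 H4) => [[]|[]] //
        | case: (pairs L1 H3 H4) => [[]|[]] //
        | case: (pairs L2 H3 H4) => [[]|[]] // ];
  move=> *; subst; by [].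
Qed.


Definition pv i := nv (if i == 2 then 0 else i).

Lemma pvE i : i <= k + 2 -> val (pv i) = if i == 2 then 0 else i.
Proof. by move=> H; rewrite /pv nvE //; case: ifP; lia. Qed.

Lemma F1 i : 2 <= i -> i <= k + 2 -> adj (nv i.+1) (pv i).
Proof. move=> H1 H2; rewrite adjE pvE // nvE; last lia. case: ifP; lia. Qed.

Lemma F1' i : 2 <= i -> i <= k + 2 -> adj (pv i) (nv i.+1).
Proof. by move=> H1 H2; rewrite adj_sym; apply: F1. Qed.

Lemma F2 i w : 2 <= i -> i <= k + 2 -> adj (nv i.+1) w -> w = pv i \/ i.+1 < val w.
Proof.
move=> H1 H2; rewrite adjE nvE; last lia.
move=> H; have : val w = val (pv i) \/ i.+1 < val w.
  by rewrite pvE //; case: ifP; lia.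
by case=> [E|E]; [left; apply: val_inj | right].
Qed.

Lemma F3 i w : 2 <= i -> i <= k + 2 -> adj (pv i) w -> w = nv i.+1 \/ val w <= i.
Proof.
move=> H1 H2; rewrite adjE pvE //.
move=> H; have : val w = i.+1 \/ val w <= i by case: ifP H; lia.
case=> [E|E]; [left; apply: veq => //; lia | by right].
Qed.

Lemma F4 i : i <= k + 2 -> val (pv i) <= i.
Proof. by move=> H; rewrite pvE //; case: ifP; lia. Qed.

Lemma stepI i a : 2 <= i -> i <= k + 2 -> col a ->
  (exists v : V, val v <= i.+1 /\ ~ fr a v) ->
  exists a', [/\ col a', rc a a', (forall v : V, i.+1 < val v -> a' v = a v) &
                 exists v : V, val v <= i /\ ~ fr a' v].
Proof.
move=> H1 H2 Ha [v [Hv Hf]].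
case: (ltnP i (val v)) => Hvi; last first.
  exists a; split => //; [exact: reconf_refl | by exists v].
have Ev : v = nv i.+1 by apply: veq; lia.
subst v; have [y [Hy Hya Hn]] := notfrozen Hf.
have Hpl : pv i <> nv i.+1 by move=> /(congr1 val); rewrite nvE; [have := F4 H2; lia | lia].
case: (classic (fr a (pv i))) => Hfp; last first.
  exists a; split => //; [exact: reconf_refl | exists (pv i); split => //; exact: F4].
have Hr : rc a (upd a (nv i.+1) y) by apply: stepU (reconf_refl Ha) Hy Hn.
exists (upd a (nv i.+1) y); split => //.
- by have [] := reconf_col Hr.
- move=> v Hv2; rewrite upd_other // => E; subst v; rewrite nvE in Hv2; lia.
- exists (pv i); split; first exact: F4.
  have [Hin Hinj] := frozen_tight HL Ha Hfp (F1' H1 H2).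
  apply: (unfrozenI (c := a (nv i.+1))) => //.
  + rewrite upd_other //; exact: (proj2 Ha) _ _ (F1 H1 H2).
  + move=> w Hw; case: (classic (w = nv i.+1)) => [-> | Hne].
      by rewrite upd_same.
    by rewrite upd_other //; apply: Hinj.
Qed.

Lemma stepII i a b chi : 2 <= i -> i <= k + 2 -> Q i -> col a -> col b ->
  (forall v : V, i.+1 < val v -> a v = b v) ->
  (exists v : V, val v <= i /\ ~ fr a v) -> (exists v : V, val v <= i /\ ~ fr b v) ->
  col chi -> (forall v : V, i < val v -> chi v = a v) -> chi (pv i) <> b (nv i.+1) ->
  (exists v : V, val v <= i /\ ~ fr chi v) ->
  (exists v : V, val v <= i /\ ~ fr (upd chi (nv i.+1) (b (nv i.+1))) v) -> rc a b.
Proof.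
move=> H1 H2 HQ Ha Hb E Ua Ub Hc Ec Hcp Uc Uc'.
have R1 : rc a chi by apply: HQ => // v Hv; rewrite Ec.
have R2 : rc chi (upd chi (nv i.+1) (b (nv i.+1))).
  apply: stepU (reconf_refl Hc) _ _; first exact: (proj1 Hb).
  move=> w Hw; case: (F2 H1 H2 Hw) => [-> // | Hw'].
  rewrite Ec; last lia. rewrite E //. apply: (proj2 Hb). by rewrite adj_sym.
apply: reconf_trans R1 (reconf_trans R2 _).
have [_ Hc'] := reconf_col R2.
apply: HQ => // v Hv.
case: (classic (v = nv i.+1)) => [-> | Hne]; first by rewrite upd_same.
have Hv' : i.+1 < val v.
  case: (ltnP i.+1 (val v)) => // Hle; exfalso; apply: Hne; apply: veq; lia.
by rewrite upd_other // Ec ?E //; lia.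
Qed.


Local Notation PSa := (PS adj L).
Lemma updPS P phi x c : PSa P phi -> c \in L x ->
  (forall w, P w -> w <> x -> adj x w -> phi w <> c) -> PSa (fun w => w = x \/ P w) (upd phi x c).
Proof. move=> H1 H2 H3. exact: (@upd_PS _ _ adj L adj_sym adj_irr P phi x c H1 H2 H3). Qed.

Definition b012 (phi : V -> C) c0 c1 c2 := upd (upd (upd phi v0 c0) v1 c1) v2 c2.

Lemma b012_0 phi c0 c1 c2 : b012 phi c0 c1 c2 v0 = c0.
Proof. rewrite /b012 upd_other; last exact: n02. rewrite upd_other; last exact: n01. exact: upd_same. Qed.
Lemma b012_1 phi c0 c1 c2 : b012 phi c0 c1 c2 v1 = c1.
Proof. by rewrite /b012 upd_other ?upd_same //; exact: n12. Qed.
Lemma b012_2 phi c0 c1 c2 : b012 phi c0 c1 c2 v2 = c2.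
Proof. by rewrite /b012 upd_same. Qed.
Lemma b012_o phi c0 c1 c2 w : 2 < val w -> b012 phi c0 c1 c2 w = phi w.
Proof. by move=> /big2 [B0 B1 B2]; rewrite /b012 !upd_other. Qed.

Lemma b012_col phi c0 c1 c2 : PSa (fun w => 2 < val w) phi ->
  c0 \in L v0 -> c0 <> phi v3 -> c1 \in L v1 -> c1 <> c0 -> c2 \in L v2 -> c2 <> c0 ->
  col (b012 phi c0 c1 c2).
Proof.
move=> HP H0 H03 H1 H10 H2 H20.
have P1 : PSa (fun w => w = v0 \/ 2 < val w) (upd phi v0 c0).
  apply: updPS HP H0 _ => w Pw _ Hadj; case: (nb0 Hadj) => E; subst w.
  - by move: Pw; rewrite v1E.
  - by move: Pw; rewrite v2E.
  - exact: nesym.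
have P2 : PSa (fun w => w = v1 \/ (w = v0 \/ 2 < val w)) (upd (upd phi v0 c0) v1 c1).
  apply: updPS P1 H1 _ => w Pw _ Hadj.
  by rewrite (nb1 Hadj) upd_same; apply: nesym.
have P3 : PSa (fun w => w = v2 \/ (w = v1 \/ (w = v0 \/ 2 < val w))) (b012 phi c0 c1 c2).
  apply: updPS P2 H2 _ => w Pw _ Hadj.
  rewrite (nb2 Hadj) upd_other; [by rewrite upd_same; apply: nesym | exact: n01].
apply/PS_col; apply: PS_mono P3 _ => w _.
case: (ltnP 2 (val w)) => Hw; first by right; right; right.
by case: (small2 Hw) => ->; [right; right; left | right; left | left].
Qed.

Lemma pick_up i (phi : V -> C) z : 3 <= i -> i <= k + 3 ->
  exists c, [/\ c \in L (nv i), c <> z & forall w : V, i < val w -> adj (nv i) w -> phi w <> c].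
Proof.
move=> H1 H2; case: (ltnP i (k + 3)) => H3.
  have HvE : val (nv i) = i by rewrite nvE //; lia.
  have HL3 : 2 < #|L (nv i)| by apply: Lmid_ge3; rewrite HvE //.
  have [c [Hc Hcz Hc2]] := avoid2 z (phi (nv i.+1)) HL3.
  exists c; split => // w Hw Hadj.
  have -> : w = nv i.+1 by apply: veq; move: Hadj; rewrite adjE nvE; lia.
  exact: nesym.
have [c [Hc Hcz]] := avoid1 z (L_ge2 (nv i)).
exists c; split => // w Hw; have := ltv w; lia.
Qed.

Definition Ext i := forall (phi : V -> C) z, PSa (fun v => i < val v) phi ->
  exists chi, [/\ col chi, (forall v : V, i < val v -> chi v = phi v), chi (nv i) <> z & ~ fr chi v1].

Lemma pick01 c3 : exists c0 c1 f, [/\ c0 \in L v0, c0 <> c3, c1 \in L v1, f \in L v1 &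
   [/\ c1 <> f, c1 <> c0 & f <> c0]].
Proof.
have [d1 [Hd1 N1]] := avoid1 c3 (ltnW (ltnW L0_ge4)).
have [d2 [Hd2 N21 N22]] := avoid2 c3 d1 (ltnW L0_ge4).
have [d3 [Hd3 N31 N32 N33]] := avoid3 c3 d1 d2 L0_ge4.
have gen : forall d, d \in L v0 -> d <> c3 -> d \notin L v1 -> exists c0 c1 f, [/\ c0 \in L v0, c0 <> c3, c1 \in L v1, f \in L v1 &
   [/\ c1 <> f, c1 <> c0 & f <> c0]].
  move=> d Hd Nd Hn; have [c1 [f [Hc1 Hf Hne]]] := two_distinct (L_ge2 v1).
  exists d, c1, f; split => //; split => // E; subst; by rewrite ?Hc1 ?Hf in Hn.
case: (boolP (d1 \in L v1)) => B1; last exact: gen d1 Hd1 N1 B1.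
case: (boolP (d2 \in L v1)) => B2; last exact: gen d2 Hd2 N21 B2.
case: (boolP (d3 \in L v1)) => B3; last exact: gen d3 Hd3 N31 B3.
by exists d1, d2, d3; split => //; split => //; apply: nesym.
Qed.

Lemma Ext3 : Ext 3.
Proof.
move=> phi z HP.
have [c3 [Hc3 Hc3z Hc3n]] := pick_up phi z (leqnn 3) (leq_addl k 3).
have P1 : PSa (fun w => w = v3 \/ 3 < val w) (upd phi v3 c3).
  by apply: updPS HP Hc3 _ => w Pw _ Ha; apply: Hc3n.
have P1' : PSa (fun w => 2 < val w) (upd phi v3 c3).
  apply: PS_mono P1 _ => w Hw; case: (ltnP 3 (val w)) => H; [by right | left]. apply: veq; first lia. by apply/eqP; rewrite eqn_leq; apply/andP; split.
have [c0 [c1 [f [H0 H03 H1 Hf [Hc1f H10 Hf0]]]]] := pick01 c3.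
have [c2 [H2 H20]] := avoid1 c0 (L_ge2 v2).
have Hcol := b012_col P1' H0 (ltac:(by rewrite upd_same)) H1 H10 H2 H20.
exists (b012 (upd phi v3 c3) c0 c1 c2); split => //.
- move=> v Hv; rewrite b012_o; last by move: Hv; simpl; lia.
  by rewrite upd_other // => E; subst v; rewrite v3E in Hv.
- by rewrite b012_o ?v3E // upd_same.
- apply: (unfrozenI (c := f)) => //; first by rewrite b012_1; apply: nesym.
  by move=> w /nb1 ->; rewrite b012_0; apply: nesym.
Qed.

Lemma ExtS i : 3 <= i -> i.+1 <= k + 3 -> Ext i -> Ext i.+1.
Proof.
move=> H1 H2 IH phi z HP.
have [c [Hc Hcz Hcn]] := pick_up phi z (leq_trans H1 (leqnSn i)) H2.
have P1 : PSa (fun w => w = nv i.+1 \/ i.+1 < val w) (upd phi (nv i.+1) c).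
  by apply: updPS HP Hc _ => w Pw _ Ha; apply: Hcn.
have P1' : PSa (fun w => i < val w) (upd phi (nv i.+1) c).
  apply: PS_mono P1 _ => w Hw; case: (ltnP i.+1 (val w)) => H; [by right | left; apply: veq; simpl in *; lia].
have [chi [Hchi Ech Hne Hu]] := IH _ c P1'.
exists chi; split => //.
- move=> v Hv; rewrite Ech; last lia.
  by rewrite upd_other // => E; subst v; rewrite nvE in Hv; lia.
- by rewrite Ech ?upd_same // nvE //; lia.
Qed.

Lemma ExtA i : 3 <= i -> i <= k + 3 -> Ext i.
Proof.
move=> H1; elim: i H1 => [//|i IH] H1 H2.
case: (ltnP 3 i.+1) => H3.
  apply: ExtS; try lia; apply: IH; lia.
have -> : i.+1 = 3 by lia.
exact: Ext3.
Qed.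

Lemma col_PS a i : col a -> PSa (fun v => i < val v) a.
Proof. by move/PS_col => H; apply: PS_mono H _. Qed.

Lemma Chi i a z : 2 <= i -> i <= k + 2 -> col a -> z <> a (nv i.+1) ->
  exists chi, [/\ col chi, (forall v : V, i < val v -> chi v = a v), chi (pv i) <> z,
    (exists v : V, val v <= i /\ ~ fr chi v) &
    (exists v : V, val v <= i /\ ~ fr (upd chi (nv i.+1) z) v)].
Proof.
move=> H1 H2 Ha Hz.
have Hl1 : nv i.+1 <> v1 by apply: vne; lia.
have Hl0 : nv i.+1 <> v0 by apply: vne; lia.
case: (ltnP 2 i) => Hi.
  have Hik : i <= k + 3 by lia.
  have HE : Ext i := ExtA Hi Hik.
  have [chi [Hc Ec Hne Hu]] := HE a z (col_PS i Ha).
  have -> : pv i = nv i by rewrite /pv; have -> : (i == 2) = false by apply/eqP; lia.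
  exists chi; split => //.
  - by exists v1; rewrite v1E; split => //; lia.
  - exists v1; rewrite v1E; split; first lia.
    apply: frozen_ext Hu => w [-> | /nb1 ->]; rewrite upd_other //; exact: nesym.
have Ei : i = 2 by lia.
subst i.
have -> : pv 2 = v0 by [].
set x := a v3 in Hz.
have HP := col_PS 2 Ha.
have [s [Hs Hsx Hsz]] := avoid2 x z (ltnW L0_ge4).
have [s' [Hs' Hs'x Hs'z Hs's]] := avoid3 x z s L0_ge4.
have U0 : forall chi, ~ fr chi v0 -> exists v : V, val v <= 2 /\ ~ fr chi v.
  by move=> chi H; exists v0; rewrite v0E.
have U1 : forall chi, ~ fr chi v1 -> exists v : V, val v <= 2 /\ ~ fr chi v.
  by move=> chi H; exists v1; rewrite v1E.
have U2 : forall chi, ~ fr chi v2 -> exists v : V, val v <= 2 /\ ~ fr chi v.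
  by move=> chi H; exists v2; rewrite v2E.
have Hagree : forall c0 c1 c2 (v : V), 2 < val v -> b012 a c0 c1 c2 v = a v.
  by move=> c0 c1 c2 v Hv; rewrite b012_o.
have Hv3' : forall c0 c1 c2, b012 a c0 c1 c2 v3 = x by move=> *; rewrite b012_o ?v3E.
case: (boolP (s' \in L v1)) => B1.
  case: (boolP (s' \in L v2)) => B2.
  - have Hcol : col (b012 a s s' s') by apply: b012_col => //; exact: nesym.
    exists (b012 a s s' s'); split; [exact: Hcol | exact: Hagree | by rewrite b012_0 | | ].
    + case: (classic (exists f0, [/\ f0 \in L v0, f0 <> s, f0 <> s' & f0 <> x /\ f0 <> z])).
        move=> [f0 [Hf0 N1 N2 [N3 N4]]].
        apply: U0; apply: (unfrozenI (c := f0)) => //; first by rewrite b012_0.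
        move=> w /nb0 [] ->; rewrite ?b012_1 ?b012_2 ?Hv3'; exact: nesym.
      move=> Hno.
      have Hall : forall c, c \in L v0 -> [\/ c = s, c = s', c = x | c = z].
        move=> c Hc; apply: NNPP => Hn; apply: Hno; exists c; split => //;
          try (move=> E; apply: Hn; subst; by constructor).
        split => E; apply: Hn; subst; by constructor.
      have Hz0 := in4 L0_ge4 Hall.
      apply: U0; apply: (unfrozenI (c := z)) => //; first by rewrite b012_0; exact: nesym.
      move=> w /nb0 [] ->; rewrite ?b012_1 ?b012_2 ?Hv3' //; exact: nesym.
    + have Hall : forall c, c \in L v0 -> [\/ c = s, c = s', c = z | c = x] \/
                    exists f0, [/\ f0 \in L v0, f0 <> s, f0 <> s' & f0 <> x /\ f0 <> z].
        move=> c Hc; case: (classic (exists f0, [/\ f0 \in L v0, f0 <> s, f0 <> s' & f0 <> x /\ f0 <> z])) => Hno; [by right | left].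
        apply: NNPP => Hn; apply: Hno; exists c; split => //;
          try (move=> E; apply: Hn; subst; by constructor).
        split => E; apply: Hn; subst; by constructor.
      have Hu3 : v0 <> v3 := n03.
      case: (classic (exists f0, [/\ f0 \in L v0, f0 <> s, f0 <> s' & f0 <> x /\ f0 <> z])).
        move=> [f0 [Hf0 N1 N2 [N3 N4]]].
        apply: U0; apply: (unfrozenI (c := f0)) => //; first by rewrite upd_other // b012_0.
        move=> w /nb0 [] ->; rewrite ?upd_same ?upd_other ?b012_1 ?b012_2; try exact: nesym;
          try exact: n13; exact: n23.
      move=> Hno.
      have Hall' : forall c, c \in L v0 -> [\/ c = s, c = s', c = z | c = x].
        by move=> c Hc; case: (Hall c Hc).
      have Hx0 := in4 L0_ge4 Hall'.
      apply: U0; apply: (unfrozenI (c := x)) => //; first by rewrite upd_other // b012_0; exact: nesym.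
      move=> w /nb0 [] ->; rewrite ?upd_same ?upd_other ?b012_1 ?b012_2 //; try exact: nesym;
          try exact: n13; exact: n23.
  - have [c2 [g [Hc2 Hg Hne]]] := two_distinct (L_ge2 v2).
    have [c1 [Hc1 Hc1s]] := avoid1 s' (L_ge2 v1).
    have Nc2 : c2 <> s' by move=> E; rewrite -E Hc2 in B2.
    have Ng : g <> s' by move=> E; rewrite -E Hg in B2.
    have Hcol : col (b012 a s' c1 c2) by apply: b012_col => //; exact: nesym.
    exists (b012 a s' c1 c2); split; [exact: Hcol | exact: Hagree | by rewrite b012_0 | | ].
    + apply: U2; apply: (unfrozenI (c := g)) => //; first by rewrite b012_2; exact: nesym.
      by move=> w /nb2 ->; rewrite b012_0; exact: nesym.
    + apply: U2; apply: (unfrozenI (c := g)) => //.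
        by rewrite upd_other ?b012_2; [exact: nesym | exact: n23].
      move=> w /nb2 ->; rewrite upd_other ?b012_0; [exact: nesym | exact: n03].
have [c1 [f [Hc1 Hf Hne]]] := two_distinct (L_ge2 v1).
have [c2 [Hc2 Hc2s]] := avoid1 s' (L_ge2 v2).
have Nc1 : c1 <> s' by move=> E; rewrite -E Hc1 in B1.
have Nf : f <> s' by move=> E; rewrite -E Hf in B1.
have Hcol : col (b012 a s' c1 c2) by apply: b012_col => //; exact: nesym.
exists (b012 a s' c1 c2); split; [exact: Hcol | exact: Hagree | by rewrite b012_0 | | ].
+ apply: U1; apply: (unfrozenI (c := f)) => //; first by rewrite b012_1; exact: nesym.
  by move=> w /nb1 ->; rewrite b012_0; exact: nesym.
+ apply: U1; apply: (unfrozenI (c := f)) => //.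
    by rewrite upd_other ?b012_1; [exact: nesym | exact: n13].
  move=> w /nb1 ->; rewrite upd_other ?b012_0; [exact: nesym | exact: n03].
Qed.

Lemma Qstep i : 2 <= i -> i <= k + 2 -> Q i -> Q i.+1.
Proof.
move=> H1 H2 HQ a b Ha Hb E Ua Ub.
have [a' [Ha' Ra Ea Ua']] := stepI H1 H2 Ha Ua.
have [b' [Hb' Rb Eb Ub']] := stepI H1 H2 Hb Ub.
have E' : forall v : V, i.+1 < val v -> a' v = b' v.
  by move=> v Hv; rewrite Ea // Eb // E.
apply: reconf_trans Ra (reconf_trans _ (reconf_sym Rb)).
case: (classic (a' (nv i.+1) = b' (nv i.+1))) => El.
  apply: HQ => // v Hv.
  case: (ltnP i.+1 (val v)) => Hv'; first exact: E'.
  have -> : v = nv i.+1 by apply: veq; simpl in *; lia.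
  exact: El.
have [chi [Hc Ec Hne Uc Uc']] := Chi H1 H2 Ha' (nesym El).
exact: (stepII H1 H2 HQ Ha' Hb' E' Ua' Ub' Hc Ec Hne Uc Uc').
Qed.

Lemma Qall n : n <= k + 1 -> Q n.+2.
Proof.
elim: n => [_|n IH H]; first exact: Q2.
apply: Qstep; try lia; apply: IH; lia.
Qed.

End Claw.

Theorem mainTheorem15 (k : nat) (C : finType) (L : 'I_(k + 4) -> {set C})
  (alpha beta : 'I_(k + 4) -> C) :
  (forall v, (deg (subdiv_claw k) v).+1 <= #|L v|) ->
  is_Lcol (subdiv_claw k) L alpha -> is_Lcol (subdiv_claw k) L beta ->
  unfrozen (subdiv_claw k) L alpha -> unfrozen (subdiv_claw k) L beta ->
  reconf (subdiv_claw k) L alpha beta.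
Proof.
move=> HL Ha Hb [va Ua] [vb Ub].
have HQ := Qall HL (leqnn (k + 1)).
apply: HQ => //.
- move=> v Hv; have := ltn_ord v; simpl in *; lia.
- exists va; split => //; have := ltn_ord va; simpl in *; lia.
- exists vb; split => //; have := ltn_ord vb; simpl in *; lia.
Qed.
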